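(* For any finite tree $T$ and any integer $k\geq 1$, $\mathrm{box}(T^k)\leq k+1$.
   Context: $T^k$ is the $k$-th power of $T$: the graph on $V(T)$ in which distinct $u,v$ are adjacent iff their distance in $T$ is at most $k$. The boxicity $\mathrm{box}(G)$ of a graph $G$ is the minimum integer $t$ such that $G$ is the intersection graph of axis-parallel $t$-dimensional boxes (Cartesian products of $t$ closed real intervals), i.e. there is a map $f$ from $V(G)$ to such boxes with $(u,v)\in E(G)\iff f(u)\cap f(v)\neq\emptyset$ for distinct $u,v$. *)

(* Defs.v *)
From Stdlib Require Import Reals.
From mathcomp Require Import all_boot.
Set Implicit Arguments. Unset Strict Implicit. Unset Printing Implicit Defensive.

Definition simple_graph (T : finType) (e : rel T) : Prop :=
  symmetric e /\ irreflexive e.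

Definition connected_graph (T : finType) (e : rel T) : Prop :=
  forall x y : T, connect e x y.

Definition acyclic_graph (T : finType) (e : rel T) : Prop :=
  forall c : seq T, ~ (ucycle e c /\ 2 < size c).

Definition is_tree (T : finType) (e : rel T) : Prop :=
  [/\ simple_graph e, 0 < #|T|, connected_graph e & acyclic_graph e].

(* dist_T(u,v) <= k : there is a walk from u to v with at most k edges. *)
Definition dist_le (T : finType) (e : rel T) (k : nat) (u v : T) : bool :=
  [exists p : (k.+1).-tuple T, exists j : 'I_k.+1,
     path e u (take j p) && (last u (take j p) == v)].

Definition graph_pow (T : finType) (e : rel T) (k : nat) : rel T :=
  fun u v => (u != v) && dist_le e k u v.

(* A t-dimensional box: for each coordinate i, the closed interval
   [fst (b i), snd (b i)] with fst (b i) <= snd (b i). *)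
Definition box (t : nat) := 'I_t -> (R * R).
Definition valid_box (t : nat) (b : box t) : Prop :=
  forall i, Rle (fst (b i)) (snd (b i)).
Definition boxes_meet (t : nat) (b1 b2 : box t) : Prop :=
  forall i, Rle (Rmax (fst (b1 i)) (fst (b2 i))) (Rmin (snd (b1 i)) (snd (b2 i))).

Definition box_rep (T : finType) (e : rel T) (t : nat) : Prop :=
  exists f : T -> box t,
    (forall v, valid_box (f v)) /\
    (forall u v, u != v -> (e u v <-> boxes_meet (f u) (f v))).

Definition boxicity_le (T : finType) (e : rel T) (m : nat) : Prop :=
  exists t, (t <= m)%N /\ box_rep e t.

(* Main.v *)
Require Import Defs.
From Stdlib Require Import Reals.
From mathcomp Require Import all_boot.
From mathcomp Require Import zify.
Set Implicit Arguments. Unset Strict Implicit. Unset Printing Implicit Defensive.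

Section Tree.
Variables (T : finType) (e : rel T).
Hypothesis sym_e : symmetric e.
Hypothesis eirr : irreflexive e.
Hypothesis acyc : acyclic_graph e.

Lemma base_cycle a P y : path e a P -> uniq (a :: P) -> y \in P ->
  y != head a P -> e y a -> False.
Proof.
move=> pP uP yP yh eya.
have iP : index y P < size P by rewrite index_mem.
have i0 : 0 < index y P.
  by case: P pP uP yP yh iP => [|x P] //= _ _ _; rewrite eq_sym => /negbTE ->.
have hc : take (index y P).+1 P = rcons (take (index y P) P) y.
  by rewrite (take_nth y iP) nth_index.
apply: (@acyc (a :: take (index y P).+1 P)); split.
  rewrite /ucycle /= hc rcons_path -hc take_path //= hc last_rcons eya /= -hc.
  move: uP => /= /andP[aP uP].
  rewrite take_uniq // andbT; apply: contra aP; exact: mem_take.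
rewrite /= size_take; case: ifP => _; rewrite ltnS //; exact: leq_ltn_trans iP.
Qed.

Lemma branch a x y p q : e a x -> e a y -> x != y -> path e x p -> path e y q ->
  uniq (a :: x :: p) -> uniq (a :: y :: q) -> last x p = last y q -> False.
Proof.
elim: q a x y p => [|y' q IH] a x y p eax eay xy px py ux uy hl.
  apply: (@base_cycle a (x :: p) y) => //=; first by rewrite eax.
  - by rewrite [y in y \in _](_ : y = last x p) ?mem_last // hl.
  - by rewrite eq_sym.
  - by rewrite sym_e.
have [yP|yP] := boolP (y \in x :: p).
  apply: (@base_cycle a (x :: p) y) => //=; first by rewrite eax.
  - by rewrite eq_sym.
  - by rewrite sym_e.
move: py => /= /andP[eyy' py'].
apply: (IH y a y' (x :: p)) => //.
- by rewrite sym_e.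
- by move: uy; rewrite /= !inE !negb_or => /and3P[/and3P[_ -> _] _ _].
- by rewrite /= eax.
- move: ux uy yP; rewrite /= !inE !negb_or => -> /and3P[/and3P[ay _ _] _ _] ->.
  by rewrite eq_sym ay.
- by move: uy; rewrite /= => /andP[_ ->].
Qed.

Lemma uniq_path_eq a p q : path e a p -> path e a q -> uniq (a :: p) ->
  uniq (a :: q) -> last a p = last a q -> p = q.
Proof.
elim: p a q => [|x p IH] a [|y q] //= pp pq up uq hl.
- by move: uq => /andP[/negP[]]; rewrite hl; exact: mem_last.
- by move: up => /andP[/negP[]]; rewrite -hl; exact: mem_last.
have [xy|xy] := eqVneq x y.
  subst y; congr (_ :: _); apply: (IH x) => //.
  - by case/andP: pp.
  - by case/andP: pq.
  - by case/andP: up.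
  - by case/andP: uq.
case/andP: pp => eax px; case/andP: pq => eay py.
by case: (branch eax eay xy px py up uq hl).
Qed.

Hypothesis conn : connected_graph e.
Variable r : T.

Definition walkb n v := [exists p : n.-tuple T, path e r p && (last r p == v)].

Lemma walkP n v : reflect (exists p : seq T, [/\ size p = n, path e r p & last r p = v]) (walkb n v).
Proof.
apply: (iffP existsP) => [[p /andP[H1 /eqP H2]] | [p [Hs H1 H2]]].
  by exists (val p); rewrite size_tuple.
have Hs' : size p == n by apply/eqP.
by exists (Tuple Hs'); rewrite /= H1 H2 eqxx.
Qed.

Lemma exw v : exists n, walkb n v.
Proof.
have /connectP [p pp lp] := conn r v.
by exists (size p); apply/walkP; exists p.
Qed.

Definition dep v := ex_minn (exw v).

Lemma dep_min n v : walkb n v -> dep v <= n.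
Proof. by rewrite /dep; case: ex_minnP => m _ H /H. Qed.

Lemma dep_walk v : walkb (dep v) v.
Proof. by rewrite /dep; case: ex_minnP. Qed.

Lemma dep_edge x y : e x y -> dep y <= (dep x).+1.
Proof.
move=> exy; apply: dep_min; have /walkP [p [sp pp lp]] := dep_walk x.
apply/walkP; exists (rcons p y); rewrite size_rcons sp rcons_path pp lp exy.
by rewrite last_rcons.
Qed.

Lemma dep_r : dep r = 0.
Proof. by apply/eqP; rewrite -leqn0; apply: dep_min; apply/walkP; exists [::]. Qed.

Lemma dep0 v : (dep v == 0) = (v == r).
Proof.
apply/idP/idP => [/eqP h|/eqP ->]; last by rewrite dep_r.
have /walkP [[|x p] [sp pp lp]] := dep_walk v; first by rewrite -lp.
by rewrite h in sp.
Qed.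

Lemma dep_par_ex v : v != r -> exists w, e v w && ((dep w).+1 == dep v).
Proof.
move=> vr; have /walkP [p [sp pp lp]] := dep_walk v.
case/lastP: p sp pp lp => [|q z] sp pp lp.
  by move: vr; rewrite -lp eqxx.
rewrite last_rcons in lp; subst z.
move: pp; rewrite rcons_path => /andP[pq ew].
exists (last r q); rewrite sym_e ew /=.
have h1 : dep (last r q) <= size q by apply: dep_min; apply/walkP; exists q.
have h2 := dep_edge ew; rewrite size_rcons in sp.
apply/eqP; lia.
Qed.

Definition par v := if [pick w | e v w && ((dep w).+1 == dep v)] is Some w then w else v.

Lemma par_r : par r = r.
Proof. by rewrite /par; case: pickP => // w /andP[_]; rewrite dep_r. Qed.

Lemma par_spec v : v != r -> e v (par v) /\ (dep (par v)).+1 = dep v.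
Proof.
move=> vr; rewrite /par; case: pickP => [w /andP[ew /eqP dw] //|H].
by have [w] := dep_par_ex vr; rewrite H.
Qed.

Lemma dep_par v : dep (par v) = (dep v).-1.
Proof.
have [->|vr] := eqVneq v r; first by rewrite par_r dep_r.
by have [_ <-] := par_spec vr.
Qed.

Definition anc n v := iter n par v.

Lemma dep_anc n v : dep (anc n v) = dep v - n.
Proof. by elim: n => [|n IH]; rewrite ?subn0 // /anc iterS dep_par -/(anc n v) IH subnS. Qed.

Lemma anc_r n : anc n r = r.
Proof. by elim: n => // n IH; rewrite /anc iterS -/(anc n r) IH par_r. Qed.

Lemma ancD m n v : anc m (anc n v) = anc (m + n) v.
Proof. by rewrite /anc iterD. Qed.

Lemma anc_stab x y v : x < y -> anc x v = anc y v -> anc x v = r.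
Proof.
move=> xy h; apply/eqP; rewrite -dep0; move: (congr1 dep h).
rewrite !dep_anc => h2; apply/eqP; lia.
Qed.

Lemma dep_iter n v : dep (iter n par v) = dep v - n.
Proof. exact: dep_anc. Qed.

Lemma anc_dep v : iter (dep v) par v = r.
Proof. by apply/eqP; rewrite -dep0 dep_iter subnn. Qed.

Lemma par_e v : v != r -> e v (par v).
Proof. by case/par_spec. Qed.

Lemma up_path n v : n <= dep v -> path e v (traject par (par v) n).
Proof.
elim: n v => [|n IH] v hn //=.
have vr : v != r by rewrite -dep0; case: (dep v) hn.
rewrite par_e //= IH // dep_par; lia.
Qed.

Lemma mem_up n v z : z \in traject par v n -> exists2 i, i < n & z = anc i v.
Proof. by move/trajectP. Qed.

Lemma up_uniq m v : m <= (dep v).+1 -> uniq (traject par v m).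
Proof.
elim: m v => [|m IH] v hm //=.
rewrite IH ?dep_par; last lia.
rewrite andbT; apply/negP => /trajectP [i im h].
have := congr1 dep h; rewrite -iterSr dep_iter; lia.
Qed.

Lemma par_edge x y : e x y -> dep x <= dep y -> par y = x.
Proof.
move=> exy hd.
have yr : y != r.
  apply/negP => /eqP yr; subst y; move: hd; rewrite dep_r leqn0 dep0 => /eqP xr.
  by move: exy; rewrite xr eirr.
have H : traject par (par y) (dep y) = x :: traject par (par x) (dep x).
  apply: (@uniq_path_eq y).
  - by rewrite up_path.
  - by rewrite /= sym_e exy up_path.
  - by rewrite -trajectS up_uniq.
  - rewrite [uniq _]/= -trajectS; apply/andP; split; last exact: (@up_uniq (dep x).+1).
    apply/negP => /trajectP [i im h].
    have := congr1 dep h; rewrite dep_iter => h2.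
    have i0 : i = 0 by lia.
    by move: h; rewrite i0 /= => h; move: exy; rewrite h eirr.
  - by rewrite /= !last_traject !anc_dep.
case dn: (dep y) H => [|n]; last by case.
by move: yr; rewrite -dep0 dn.
Qed.

Lemma tree_edge x y : e x y -> par x = y \/ par y = x.
Proof.
move=> exy; have [h|h] := leqP (dep x) (dep y); first by right; apply: par_edge.
by left; apply: par_edge; rewrite 1?sym_e // ltnW.
Qed.

Definition wk x y n := exists p, [/\ size p <= n, path e x p & last x p = y].

Lemma up_wk i x : wk x (anc i x) i.
Proof.
elim: i => [|i [p [sp pp lp]]]; first by exists [::].
rewrite /anc iterS -/(anc i x).
have [h|h] := eqVneq (par (anc i x)) (anc i x).
  by rewrite h; exists p; split => //; apply: leqW.
exists (rcons p (par (anc i x))); rewrite size_rcons rcons_path pp lp last_rcons.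
split => //; rewrite par_e //; by apply: contraNneq h => ->; rewrite par_r.
Qed.

Lemma down_wk j v : wk (anc j v) v j.
Proof.
elim: j v => [|j IH] v; first by exists [::].
rewrite /anc iterSr -/(anc j (par v)).
have [h|h] := eqVneq (par v) v.
  by rewrite h; have [p [sp pp lp]] := IH v; exists p; split => //; apply: leqW.
have [p [sp pp lp]] := IH (par v).
exists (rcons p v); rewrite size_rcons rcons_path pp lp last_rcons sym_e par_e //.
by apply: contraNneq h => ->; rewrite par_r.
Qed.

Lemma wk_cat x y z m n : wk x y m -> wk y z n -> wk x z (m + n).
Proof.
move=> [p [sp pp lp]] [q [sq pq lq]]; exists (p ++ q).
by rewrite size_cat cat_path last_cat lp pp pq lq leq_add.
Qed.

Lemma dist_leP k u v : reflect (wk u v k) (dist_le e k u v).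
Proof.
apply: (iffP existsP) => [[p /existsP [j /andP[pp /eqP lp]]]|[p [sp pp lp]]].
  exists (take j p); split => //; rewrite size_take.
  have := ltn_ord j; case: ifP => [_|]; rewrite ?ltnS // size_tuple; lia.
have hs : size (p ++ nseq (k.+1 - size p) u) == k.+1.
  by rewrite size_cat size_nseq; apply/eqP; lia.
exists (Tuple hs); apply/existsP; exists (Ordinal (leq_ltn_trans sp (ltnSn k))).
by rewrite /= take_size_cat // pp lp eqxx.
Qed.

Definition anccond k u v := exists i j, i + j <= k /\ anc i u = anc j v.

Lemma path_anc u p : path e u p -> exists i j, i + j <= size p /\ anc i u = anc j (last u p).
Proof.
elim: p u => [|x p IH] u /=; first by move=> _; exists 0, 0.
case/andP=> eux /IH [i [j [hij h]]].
have [pu|px] := tree_edge eux.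
  by exists i.+1, j; split; [lia| rewrite /anc iterSr pu].
case: i hij h => [|i] hij h.
  by exists 0, j.+1; split; [lia| rewrite /anc iterS -/(anc j _) -h -px].
by exists i, j; split; [lia| rewrite -h /anc iterSr px].
Qed.

Lemma pow_anc k u v : graph_pow e k u v <-> u != v /\ anccond k u v.
Proof.
split.
  case/andP=> uv /dist_leP [p [sp pp lp]]; split => //.
  have [i [j [hij h]]] := path_anc pp; exists i, j; rewrite -lp; split => //; lia.
case=> uv [i [j [hij h]]]; apply/andP; split => //; apply/dist_leP.
have [m hm] : exists m, k = i + j + m by exists (k - (i + j)); lia.
rewrite hm; apply: (@wk_cat _ v _ _ m); last by exists [::].
by apply: (@wk_cat _ (anc i u)); [exact: up_wk | rewrite h; exact: down_wk].
Qed.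

Fixpoint lexle (s t : seq nat) : bool :=
  if s is a :: s' then (if t is b :: t' then (a < b) || ((a == b) && lexle s' t') else false)
  else true.

Lemma lexle_refl s : lexle s s.
Proof. by elim: s => //= a s ->; rewrite eqxx orbT. Qed.

Lemma lexle_trans s t w : lexle s t -> lexle t w -> lexle s w.
Proof.
elim: s t w => [|a s IH] [|b t] [|c w] //=.
case/orP=> [ab|/andP[/eqP <- st]] /orP[bc|/andP[/eqP <- tw]].
- by rewrite (ltn_trans ab bc).
- by rewrite ab.
- by rewrite bc.
- by rewrite eqxx (IH _ _ st tw) orbT.
Qed.

Lemma lexle_total s t : lexle s t || lexle t s.
Proof.
elim: s t => [|a s IH] [|b t] //=.
case: (ltngtP a b) => //= ->; by rewrite eqxx /= IH.
Qed.

Lemma lexle_anti s t : lexle s t -> lexle t s -> s = t.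
Proof.
elim: s t => [|a s IH] [|b t] //=.
case/orP=> [ab|/andP[/eqP <- st]] /orP[ba|/andP[/eqP ba ts]].
- by move: (ltn_trans ab ba); rewrite ltnn.
- by move: ab; rewrite ba ltnn.
- by move: ba; rewrite ltnn.
- by rewrite (IH _ st ts).
Qed.

Lemma lexle_cat s q : lexle s (s ++ q).
Proof. by elim: s => //= a s ->; rewrite eqxx orbT. Qed.

Lemma lex_prefix p q w : lexle p w -> lexle w (p ++ q) -> exists q', w = p ++ q'.
Proof.
elim: p w => [|a p IH] w; first by exists w.
case: w => [|b w] //=.
case/orP=> [ab|/andP[/eqP <- pw]] /orP[ba|/andP[/eqP ba wq]].
- by move: (ltn_trans ab ba); rewrite ltnn.
- by move: ab; rewrite ba ltnn.
- by move: ba; rewrite ltnn.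
- by have [q' ->] := IH _ pw wq; exists q'.
Qed.

Definition key v := rev (map pickle (traject par v (dep v))).

Lemma size_key v : size (key v) = dep v.
Proof. by rewrite size_rev size_map size_traject. Qed.

Lemma key_r : key r = [::].
Proof. by apply/nilP; rewrite /nilp size_key dep_r. Qed.

Lemma key_anc s v : s <= dep v ->
  key v = key (anc s v) ++ rev (map pickle (traject par v s)).
Proof.
move=> sv; rewrite /key dep_anc.
by rewrite -{1}(subnKC sv) trajectD map_cat rev_cat.
Qed.

Lemma key_inj : injective key.
Proof.
move=> u v h; have := congr1 size h; rewrite !size_key => hd.
case du: (dep u) hd => [|n] hd.
  by move/eqP: du; rewrite dep0 => /eqP ->; apply/esym/eqP; rewrite -dep0 -hd.
move: h; rewrite /key du -hd !trajectS /= !rev_cons => /(congr1 (last 0)).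
by rewrite !last_rcons => /(pcan_inj pickleK).
Qed.

Definition desc x w := x \in traject par w (dep w).+1.

Lemma descP x w : reflect (exists s, anc s w = x) (desc x w).
Proof.
apply: (iffP trajectP) => [[i _ ->]|[s <-]]; first by exists i.
have [sl|sl] := leqP s (dep w); first by exists s.
exists (dep w) => //; rewrite -(subnK (ltnW sl)) -ancD.
by rewrite /anc anc_dep -/(anc _ r) anc_r.
Qed.

Lemma desc_key x w : desc x w <-> exists q, key w = key x ++ q.
Proof.
split.
  case/descP=> s <-; have [sl|sl] := leqP s (dep w).
    by rewrite (key_anc sl); eexists.
  rewrite -(subnK (ltnW sl)) -ancD /anc anc_dep -/(anc _ r) anc_r key_r.
  by exists (key w).
case=> q h; apply/descP; exists (size q).
have := congr1 size h; rewrite size_cat !size_key => hs.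
have sl : size q <= dep w by lia.
move: h; rewrite (key_anc sl) => /eqP; rewrite eqseq_cat; last first.
  by rewrite !size_key dep_anc; lia.
by case/andP => /eqP /key_inj.
Qed.

Lemma desc_trans x y z : desc x y -> desc y z -> desc x z.
Proof.
move=> /descP [s <-] /descP [t <-]; apply/descP; exists (s + t); by rewrite ancD.
Qed.

Lemma desc_anc s v : desc (anc s v) v.
Proof. by apply/descP; exists s. Qed.

Lemma desc_refl v : desc v v.
Proof. exact: (desc_anc 0). Qed.

Definition pos v := #|[pred w | ~~ lexle (key v) (key w)]|.

Lemma pos_le u v : lexle (key u) (key v) -> pos u <= pos v.
Proof.
move=> uv; apply: subset_leq_card; apply/subsetP => w; rewrite !inE.
by apply: contra; apply: lexle_trans.
Qed.

Lemma pos_lt u v : ~~ lexle (key v) (key u) -> pos u < pos v.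
Proof.
move=> vu; apply: proper_card; apply/properP; split.
  apply/subsetP => w; rewrite !inE; apply: contra => vw.
  by apply: lexle_trans vw; have := lexle_total (key u) (key v); rewrite (negbTE vu) orbF.
by exists u; rewrite !inE ?vu ?lexle_refl.
Qed.

Lemma pos_ltE u v : (pos u < pos v) = ~~ lexle (key v) (key u).
Proof.
apply/idP/idP; last exact: pos_lt.
by apply: contraTN => /pos_le; rewrite -leqNgt.
Qed.

Lemma pos_inj : injective pos.
Proof.
move=> u v h; apply: key_inj.
have := lexle_total (key u) (key v).
case/orP => h1.
  case h2: (lexle (key v) (key u)); first exact: lexle_anti.
  by move: (pos_lt (negbT h2)); rewrite h ltnn.
case h2: (lexle (key u) (key v)); first exact: lexle_anti.
by move: (pos_lt (negbT h2)); rewrite h ltnn.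
Qed.

Lemma desc_pos x w : desc x w -> pos x <= pos w.
Proof. by case/desc_key => q hq; apply: pos_le; rewrite hq; apply: lexle_cat. Qed.

Definition endp x := \max_(w | desc x w) pos w.

Lemma endp_ge x w : desc x w -> pos w <= endp x.
Proof. by move=> h; apply: (leq_bigmax_cond (P := desc x)). Qed.

Lemma endp_ex x : exists2 w, desc x w & endp x = pos w.
Proof.
have [|w Aw h] := @eq_bigmax_cond _ (desc x) pos.
  by apply/card_gt0P; exists x; exact: desc_refl.
by exists w.
Qed.

Lemma F1 u v A : desc A v -> ~~ desc A u -> pos u < pos v -> pos u < pos A.
Proof.
move=> Av Au uv; rewrite ltnNge; apply: contra Au => Au.
have /desc_key [q hq] := Av.
rewrite pos_ltE in uv.
have h1 : lexle (key A) (key u).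
  by move: Au; rewrite leqNgt pos_ltE negbK.
have h2 : lexle (key u) (key v).
  by have := lexle_total (key u) (key v); rewrite (negbTE uv) orbF.
apply/desc_key; apply: (@lex_prefix _ q _ h1); by rewrite -hq.
Qed.

Lemma F2 u v A B : desc A v -> ~~ desc A u -> desc B u -> ~~ desc B v ->
  pos u < pos v -> endp B < pos A.
Proof.
move=> Av Au Bu Bv uv; have [w Bw ->] := endp_ex B.
have uA := F1 Av Au uv.
rewrite pos_ltE; apply: contra Bv => Aw.
apply: desc_trans _ Av; have /desc_key [q hq] := Bw.
apply/desc_key; apply: (@lex_prefix _ q); last by rewrite -hq.
have /desc_key [q' hq'] := Bu.
apply: lexle_trans (_ : lexle (key u) (key A)).
  by rewrite hq'; apply: lexle_cat.
rewrite pos_ltE in uA.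
by have := lexle_total (key u) (key A); rewrite (negbTE uA) orbF.
Qed.

Lemma disc (P : pred nat) k : P 0 -> ~~ P k -> exists m, [/\ m < k, P m & ~~ P m.+1].
Proof.
elim: k => [|k IH] P0 Pk; first by rewrite P0 in Pk.
case Pk': (P k); first by exists k.
by have [m [mk Pm Pm1]] := IH P0 (negbT Pk'); exists m; split => //; apply: ltnW.
Qed.

Definition Xc k u v i := desc (anc (k - i) v) u.
Definition Yc u v i := (0 < i) && desc (anc i.-1 u) v.

Lemma core k u v : pos u < pos v ->
  (anccond k u v <-> forall i, i <= k -> Xc k u v i || Yc u v i).
Proof.
move=> uv; split.
  case=> [i0 [j0 [hk h]]] i ik; rewrite /Xc /Yc.
  have [ji|ji] := leqP j0 (k - i).
    apply/orP; left; apply/descP; exists (k - i - j0 + i0).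
    by rewrite -ancD h ancD subnK.
  apply/orP; right; apply/andP; split; first lia.
  apply/descP; exists (i.-1 - i0 + j0).
  by rewrite -ancD -h ancD subnK //; lia.
move=> H.
have X0 : Xc k u v 0 by have := H 0 (leq0n k); rewrite /Yc /= orbF.
have Xk : ~~ Xc k u v k.
  rewrite /Xc subnn; apply/negP => /desc_pos; rewrite leqNgt uv //.
have [m [mk Xm Xm1]] := disc X0 Xk.
have := H m.+1 mk; rewrite (negbTE Xm1) /Yc /= => /descP [t ht].
case/descP: Xm => s hs.
have [sm|sm] := leqP s m.
  by exists s, (k - m); split; [lia|].
have hs2 : anc (k - m) v = anc (s - m + t) v.
  by rewrite -hs -ancD ht ancD subnK // ltnW.
have [tk|tk] := leqP t (k - m).
  by exists m, t; split; [lia|].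
have kt : k - m < s - m + t by lia.
have hr := anc_stab kt hs2.
exists m, (k - m); split; first lia.
rewrite -ht; have -> : t = t - (k - m) + (k - m) by lia.
by rewrite -ancD hr anc_r.
Qed.

Definition Lc k i v := pos (anc (k - i) v).
Definition Rc i v := if i == 0 then pos v else endp (anc i.-1 v).

Lemma Rc_ge i v : pos v <= Rc i v.
Proof. by rewrite /Rc; case: ifP => // _; apply: endp_ge; apply: desc_anc. Qed.

Lemma LR k i v : Lc k i v <= Rc i v.
Proof. exact: leq_trans (desc_pos (desc_anc _ _)) (Rc_ge _ _). Qed.

Lemma meet_other k i u v : pos u < pos v -> Lc k i u <= Rc i v.
Proof.
move=> uv; apply: leq_trans (desc_pos (desc_anc _ _)) _.
exact: leq_trans (ltnW uv) (Rc_ge _ _).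
Qed.

Lemma meet_dim k i u v : pos u < pos v ->
  (Lc k i v <= Rc i u) = Xc k u v i || Yc u v i.
Proof.
move=> uv; rewrite /Lc /Xc /Yc; apply/idP/idP.
  apply: contraTT; rewrite negb_or -ltnNge => /andP[nX nY].
  rewrite /Rc; case: ifP => [/eqP i0|i0].
    exact: F1 (desc_anc _ _) nX uv.
  apply: F2 (desc_anc _ _) nX (desc_anc _ _) _ uv.
  by move: nY; rewrite lt0n i0.
case/orP => [hX|/andP[i0 hY]].
  exact: leq_trans (desc_pos hX) (Rc_ge _ _).
rewrite /Rc; case: ifP => [/eqP i00|_]; first by rewrite i00 in i0.
exact: leq_trans (desc_pos (desc_anc _ _)) (endp_ge hY).
Qed.

Definition boxf k v : box k.+1 := fun i => (INR (Lc k i v), INR (Rc i v)).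
Arguments boxf : clear implicits.

Lemma meet_iff k u v : pos u < pos v ->
  boxes_meet (boxf k u) (boxf k v) <-> forall i : 'I_k.+1, Lc k i v <= Rc i u.
Proof.
move=> uv; split.
  move=> H i; have := H i; rewrite /boxf /= => h.
  apply/leP; apply: INR_le.
  apply: Rle_trans (Rmax_r _ _) _; apply: Rle_trans h _; exact: Rmin_l.
move=> H i; rewrite /boxf /=.
have le1 : forall a b, a <= b -> Rle (INR a) (INR b) by move=> a b /leP; apply: le_INR.
apply: Rmax_lub; apply: Rmin_glb; apply: le1.
- exact: LR.
- exact: meet_other.
- exact: H.
- exact: LR.
Qed.

Lemma main_lt k u v : pos u < pos v ->
  (graph_pow e k u v <-> boxes_meet (boxf k u) (boxf k v)).
Proof.
move=> uv; have uv' : u != v by apply: contraTneq uv => ->; rewrite ltnn.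
rewrite pow_anc meet_iff // core //; split.
  case=> _ H i; rewrite meet_dim //; apply: H; rewrite -ltnS; exact: ltn_ord.
move=> H; split => // i ik; rewrite -meet_dim //.
exact: (H (Ordinal (ik : i < k.+1))).
Qed.

Lemma main k : boxicity_le (graph_pow e k) k.+1.
Proof.
exists k.+1; split => //; exists (boxf k); split.
  by move=> v i; apply: le_INR; apply/leP; exact: LR.
move=> u v uv; have [h|h|h] := ltngtP (pos u) (pos v).
- exact: main_lt.
- have sym1 : graph_pow e k u v <-> graph_pow e k v u.
    rewrite !pow_anc eq_sym; split; case=> -> [i [j [hij h']]];
      by split => //; exists j, i; split; [lia|].
  have sym2 : boxes_meet (boxf k u) (boxf k v) <-> boxes_meet (boxf k v) (boxf k u).
    by split => H i; rewrite Rmax_comm Rmin_comm; apply: H.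
  by rewrite sym1 sym2; apply: main_lt.
- by move: uv; rewrite (pos_inj h) eqxx.
Qed.
End Tree.

Theorem theorem1 (T : finType) (e : rel T) (k : nat) :
  is_tree e -> (1 <= k)%N -> boxicity_le (graph_pow e k) k.+1.
Proof.
case=> [[hs hi] /card_gt0P [r _] hc ha] _.
exact: (main hs hi ha hc r k).
Qed.
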